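(* Let $\mathcal{Q}_1\subseteq\mathcal{Q}_2$ be congruences on $\mathbb{N}^d$. Then (i) $U(\mathcal{Q}_1)\subseteq U(\mathcal{Q}_2)$, and (ii) for each $\mathbf{q}\in\mathcal{Q}_2\setminus\mathcal{Q}_1$ there exists $\mathbf{p}\in U(\mathcal{Q}_2)\setminus U(\mathcal{Q}_1)$ with $\|\mathbf{p}\|\le\|\mathbf{q}\|$.
   Context: A congruence on $\mathbb{N}^d$ is an equivalence relation $\mathcal{Q}\subseteq\mathbb{N}^d\times\mathbb{N}^d$ with $(\mathbf{a},\mathbf{b})\in\mathcal{Q}\Rightarrow(\mathbf{a}+\mathbf{c},\mathbf{b}+\mathbf{c})\in\mathcal{Q}$ (seen as a subset of $\mathbb{N}^{2d}$). $\|\cdot\|$ is the maximum norm. For $X\subseteq\mathbb{N}^k$, $X\uparrow=\{\mathbf{y}\mid\exists\mathbf{x}\in X:\mathbf{x}\le\mathbf{y}\}$ (componentwise order). For a congruence $\mathcal{Q}$, $U(\mathcal{Q})\subseteq\mathbb{N}^{4d}$ is $U(\mathcal{Q})=\{(\mathbf{x},\mathbf{y},\mathbf{u},\mathbf{v})\mid(\mathbf{x},\mathbf{y})\in\mathcal{Q},(\mathbf{x}+\mathbf{u},\mathbf{y}+\mathbf{v})\in\mathcal{Q},(\mathbf{u},\mathbf{v})\ne(\mathbf{0},\mathbf{0})\}\uparrow$. *)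

(* Defs.v *)
From mathcomp Require Import all_boot.
Set Implicit Arguments. Unset Strict Implicit. Unset Printing Implicit Defensive.

Definition vec (d : nat) := 'I_d -> nat.

Definition vadd d (a b : vec d) : vec d := fun i => a i + b i.
Definition vzero d : vec d := fun _ => 0.
Definition vle d (a b : vec d) : Prop := forall i, a i <= b i.
Definition vnorm d (a : vec d) : nat := \max_(i < d) a i.

Definition congruence d (Q : vec d -> vec d -> Prop) : Prop :=
  (forall a, Q a a) /\
  (forall a b, Q a b -> Q b a) /\
  (forall a b c, Q a b -> Q b c -> Q a c) /\
  (forall a b c, Q a b -> Q (vadd a c) (vadd b c)).

(* Elements of N^{4d} are represented as quadruples (x,y,u,v). *)
Definition quad d := (vec d * vec d * vec d * vec d)%type.

Definition qle d (p p' : quad d) : Prop :=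
  let: (x, y, u, v) := p in let: (x', y', u', v') := p' in
  vle x x' /\ vle y y' /\ vle u u' /\ vle v v'.

Definition pnorm d (q : vec d * vec d) : nat := maxn (vnorm q.1) (vnorm q.2).
Definition qnorm d (p : quad d) : nat :=
  let: (x, y, u, v) := p in maxn (maxn (vnorm x) (vnorm y)) (maxn (vnorm u) (vnorm v)).

Definition Ugen d (Q : vec d -> vec d -> Prop) (p : quad d) : Prop :=
  let: (x, y, u, v) := p in
  Q x y /\ Q (vadd x u) (vadd y v) /\ ~ (forall i, u i = 0 /\ v i = 0).

Definition U d (Q : vec d -> vec d -> Prop) (p : quad d) : Prop :=
  exists p0, Ugen Q p0 /\ qle p0 p.

(* Main.v *)
Require Import Defs.
From mathcomp Require Import all_boot.
From mathcomp Require Import zify.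
From Stdlib Require Import Classical FunctionalExtensionality.

Lemma vnorm_mono d (a b : vec d) : vle a b -> vnorm a <= vnorm b.
Proof.
move=> H; rewrite /vnorm; apply/bigmax_leqP => i _.
exact: leq_trans (H i) (leq_bigmax i).
Qed.

Arguments vnorm_mono {d a b}.

Lemma sum_lt d (f g : vec d) (i : 'I_d) : vle f g -> f i < g i ->
  \sum_(j < d) f j < \sum_(j < d) g j.
Proof.
move=> H Hi; rewrite (bigD1 i) //= [X in _ < X](bigD1 i) //=.
rewrite -addSn; apply: leq_add Hi _; exact: leq_sum (fun j _ => H j).
Qed.

Lemma sum_le d (f g : vec d) : vle f g ->
  \sum_(j < d) f j <= \sum_(j < d) g j.
Proof. by move=> H; apply: leq_sum => j _. Qed.

Lemma key d (Q : vec d -> vec d -> Prop) (x y x' y' u' v' : vec d) :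
  congruence Q -> Q x' y' -> Q x y -> Q (vadd x' u') (vadd y' v') ->
  vle x' x -> vle y' y -> Q (vadd x u') (vadd y v').
Proof.
move=> [_ [Hs [Ht Htr]]] H' H H2 Hx Hy.
pose w : vec d := fun i => x i - x' i.
have E1 : vadd (vadd x' u') w = vadd x u'.
  apply: functional_extensionality => i; rewrite /vadd /w; have := Hx i; lia.
have E2 : vadd x' w = x.
  apply: functional_extensionality => i; rewrite /vadd /w; have := Hx i; lia.
have E3 : vadd (vadd y' v') w = vadd (vadd y' w) v'.
  apply: functional_extensionality => i; rewrite /vadd /w; lia.
have S1 := Htr _ _ w H2; rewrite E1 E3 in S1.
have S2 := Htr _ _ w (Hs _ _ H'); rewrite E2 in S2.
have S3 := Htr _ _ v' S2.
have S4 := Htr _ _ v' H.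
exact: Ht _ _ _ S1 (Ht _ _ _ S3 S4).
Qed.

Theorem lemma14 (d : nat) (Q1 Q2 : vec d -> vec d -> Prop) :
  congruence Q1 -> congruence Q2 ->
  (forall a b, Q1 a b -> Q2 a b) ->
  (forall p : quad d, U Q1 p -> U Q2 p) /\
  (forall q : vec d * vec d, Q2 q.1 q.2 -> ~ Q1 q.1 q.2 ->
     exists p : quad d, U Q2 p /\ ~ U Q1 p /\ qnorm p <= pnorm q).
Proof.
move=> C1 C2 Hsub; split.
  move=> [[[x y] u] v] [[[[x0 y0] u0] v0] [[H1 [H2 H3]] Hle]].
  by exists (x0, y0, u0, v0); split => //; split; [apply: Hsub|split=>//; apply: Hsub].
case=> a b /= Qab NQab.
pose def (x y : vec d) := \sum_(i < d) (a i - x i) + \sum_(i < d) (b i - y i).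
suff main : forall n x y, vle x a -> vle y b -> Q1 x y -> def x y < n ->
  exists p : quad d, U Q2 p /\ ~ U Q1 p /\ qnorm p <= pnorm (a, b).
  apply: (main (def (@vzero d) (@vzero d)).+1 (@vzero d) (@vzero d)); last exact: ltnSn.
  - by move=> i.
  - by move=> i.
  - by case: C1.
elim=> [//|n IH] x y Hxa Hyb Qxy Hdef.
pose p : quad d := (x, y, fun i => a i - x i, fun i => b i - y i).
have [HU|HnU] := classic (U Q1 p); last first.
  exists p; split; last split => //.
  - exists p; split; last by split; [|split; [|split]] => i.
    split; first exact: Hsub.
    have Ea : vadd x (fun i => a i - x i) = a.
      apply: functional_extensionality => i; rewrite /vadd; have := Hxa i; lia.
    have Eb : vadd y (fun i => b i - y i) = b.
      apply: functional_extensionality => i; rewrite /vadd; have := Hyb i; lia.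
    rewrite Ea Eb; split => // Hz; apply: NQab.
    have -> : a = x.
      apply: functional_extensionality => i; have := Hxa i; have := Hz i; lia.
    have -> : b = y.
      apply: functional_extensionality => i; have := Hyb i; have := Hz i; lia.
    exact: Qxy.
  - rewrite /qnorm /pnorm /=.
    have := vnorm_mono Hxa; have := vnorm_mono Hyb.
    have := @vnorm_mono d (fun i => a i - x i) a (fun i => leq_subr _ _).
    have := @vnorm_mono d (fun i => b i - y i) b (fun i => leq_subr _ _).
    lia.
move: HU => [[[[x' y'] u'] v'] [[H1 [H2 H3]] [Hx [Hy [Hu Hv]]]]].
have Q' : Q1 (vadd x u') (vadd y v') by exact: key C1 H1 Qxy H2 Hx Hy.
have [i Hi] := not_all_ex_not _ _ H3.
have Hxa' : vle (vadd x u') a.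
  by move=> j; rewrite /vadd; have := Hu j; have := Hxa j; lia.
have Hyb' : vle (vadd y v') b.
  by move=> j; rewrite /vadd; have := Hv j; have := Hyb j; lia.
apply: (IH _ _ Hxa' Hyb' Q').
have L1 := @sum_le d (fun j => a j - vadd x u' j) (fun j => a j - x j)
  (fun j => leq_sub2l _ (leq_addr _ _)).
have L2 := @sum_le d (fun j => b j - vadd y v' j) (fun j => b j - y j)
  (fun j => leq_sub2l _ (leq_addr _ _)).
suff : def (vadd x u') (vadd y v') < def x y by rewrite /def in Hdef *; lia.
rewrite /def.
have [Pu|Pu] : u' i = 0 \/ 0 < u' i by lia.
  have Pv : 0 < v' i by move: Hi Pu; lia.
  have L3 := @sum_lt d (fun j => b j - vadd y v' j) (fun j => b j - y j) i
    (fun j => leq_sub2l _ (leq_addr _ _)).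
  have : b i - vadd y v' i < b i - y i.
    by rewrite /vadd; have := Hv i; have := Hyb i; lia.
  move=> /L3; lia.
have L3 := @sum_lt d (fun j => a j - vadd x u' j) (fun j => a j - x j) i
  (fun j => leq_sub2l _ (leq_addr _ _)).
have : a i - vadd x u' i < a i - x i.
  by rewrite /vadd; have := Hu i; have := Hxa i; lia.
move=> /L3; lia.
Qed.
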